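(* Let $G$ be a finite group, $H\leq G$ a subgroup of index $n$, and $T=\{t_1,\ldots,t_n\}$ a right transversal to $H$ in $G$ with $t_1=1$. For $g\in G$ write $g=\mathsf{H}(g)\mathsf{T}(g)$ with $\mathsf{H}(g)\in H$ and $\mathsf{T}(g)\in T$ (uniquely determined). Let $\chi$ be a linear character of $H$, let $\chi^+$ be its extension to $G$ by $0$ outside $H$, and let $\rho$ be the representation $\rho(g)=[\chi^+(t_igt_k^{-1})]_{i,k}$ of $G$. Put $\chi_{\mathsf{H}}(g)=\chi(\mathsf{H}(g))$ for $g\in G$. Let $M$ be an $n\times n$ complex matrix whose rows and columns are labelled by $T$ (in the order $t_1,\ldots,t_n$), and write $m(s,t)$ for the entry in row $s$ and column $t$. Then $M$ lies in the centraliser algebra $\mathrm{C}(\rho)=\{X\in M_n(\mathbb{C}) : X\rho(g)=\rho(g)X \text{ for all } g\in G\}$ if and only if for all $g\in G$ and $t\in T$, \[ m(\mathsf{T}(g),\mathsf{T}(tg)) = m(1,t)\,\chi_{\mathsf{H}}(g)^{-1}\,\chi_{\mathsf{H}}(tg).\]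
   Context: A right transversal $T$ to $H$ in $G$ is a set such that every $g\in G$ factorises uniquely as $g=ht$ with $h\in H$, $t\in T$. Here $1=t_1\in T$ is the identity element, labelling the coset $H$. *)

(* Defs.v *)
From HB Require Import structures.
From mathcomp Require Import all_boot all_order all_algebra all_fingroup all_solvable all_field all_character.
Set Implicit Arguments. Unset Strict Implicit. Unset Printing Implicit Defensive.
Import GRing.Theory Num.Theory.
Local Open Scope group_scope.

Definition Tpart (gT : finGroupType) (H T : {set gT}) (g : gT) : gT :=
  transversal_repr 1 T (H :* g).

Definition Hpart (gT : finGroupType) (H T : {set gT}) (g : gT) : gT :=
  g * (Tpart H T g)^-1.

(* rho(g) = [chi^+(t_i g t_k^-1)]_{i,k}; a class function in 'CF(H) already
   vanishes outside H, so it is its own extension chi^+ by 0. *)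
Definition rho_mx (gT : finGroupType) (H : {group gT}) (n : nat)
  (t : 'I_n -> gT) (chi : 'CF(H)) (g : gT) : 'M[algC]_n :=
  \matrix_(i, k) chi (t i * g * (t k)^-1).

(* Main.v *)
Require Import Defs.
From HB Require Import structures.
From mathcomp Require Import all_boot all_order all_algebra all_fingroup all_solvable all_field all_character.
Import GRing.Theory Num.Theory.
Local Open Scope ring_scope.

Set Implicit Arguments. Unset Strict Implicit.
Section Aux.
Variables (gT : finGroupType) (G H : {group gT}) (n : nat) (t : 'I_n.+1 -> gT).
Local Notation X := (t @: setT).
Hypothesis trX : is_transversal X (rcosets H G) G.

Lemma tG k : t k \in G.
Proof. by apply: (subsetP (transversal_sub trX)); apply/imsetP; exists k. Qed.

Lemma tX k : t k \in X.
Proof. by apply/imsetP; exists k. Qed.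

Lemma rcosetG g : g \in G -> (H :* g)%g \in rcosets H G.
Proof. by move=> Gg; apply/rcosetsP; exists g. Qed.

Lemma TpartE g y : g \in G -> y \in X ->
  ((g * y^-1)%g \in H) = (y == Tpart H X g).
Proof.
move=> Gg Xy; rewrite -in_set1 /Tpart -(setI_transversal_pblock trX 1%g (rcosetG Gg)).
by rewrite inE Xy /= mem_rcoset -groupV invMg invgK.
Qed.

Lemma Tpart_X g : g \in G -> Tpart H X g \in X.
Proof. by move=> Gg; apply: (repr_mem_transversal trX 1%g (rcosetG Gg)). Qed.

Lemma Hpart_H g : g \in G -> Hpart H X g \in H.
Proof. by move=> Gg; rewrite /Hpart TpartE ?Tpart_X. Qed.

Lemma Tpart_idx g : g \in G -> exists k, Tpart H X g = t k.
Proof. by move=> /Tpart_X /imsetP [k _ ->]; exists k. Qed.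

Lemma X_eq a b : a \in X -> b \in X -> (a * b^-1)%g \in H -> a = b.
Proof.
move=> Xa Xb Hab.
have Gb : b \in G by apply: (subsetP (transversal_sub trX)).
have e1 : a == Tpart H X b by rewrite -TpartE // -groupV invMg invgK.
have e2 : b == Tpart H X b by rewrite -TpartE // mulgV group1.
by rewrite (eqP e1); apply/esym/eqP.
Qed.

Lemma TpartK k g l : g \in G ->
  (t k * g * (t l)^-1)%g \in H -> t l = Tpart H X (t k * g)%g.
Proof.
move=> Gg h; apply/eqP; rewrite -(TpartE (groupM (tG k) Gg) (tX l)); exact: h.
Qed.

Lemma TpartK' k g l : g \in G ->
  t l = Tpart H X (t k * g)%g -> (t k * g * (t l)^-1)%g \in H.
Proof.
by move=> Gg e; rewrite (TpartE (groupM (tG k) Gg) (tX l)) e.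
Qed.

Lemma Tpart_t i : t i = Tpart H X (t i).
Proof. by apply/eqP; rewrite -(TpartE (tG i) (tX i)) mulgV group1. Qed.

Hypothesis injt : injective t.

Lemma idx_uniq g k k' l : g \in G ->
  (t k * g * (t l)^-1)%g \in H -> (t k' * g * (t l)^-1)%g \in H -> k' = k.
Proof.
move=> Gg h1 h2; apply: injt; apply: X_eq; rewrite ?tX //.
have -> : (t k' * (t k)^-1 = (t k' * g * (t l)^-1) * (t k * g * (t l)^-1)^-1)%g.
  by rewrite !invMg !invgK !mulgA mulgKV mulgK.
by rewrite groupM ?groupV.
Qed.

Variable chi : 'CF(H).

Lemma mulM_rho (M : 'M[algC]_n.+1) g i k l : g \in G ->
  t l = Tpart H X (t k * g)%g ->
  (M *m rho_mx t chi g) i l = M i k * chi (t k * g * (t l)^-1)%g.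
Proof.
move=> Gg el; rewrite !mxE (bigD1 k) //= big1 ?addr0 ?mxE // => k' nk'.
rewrite mxE cfun0 ?mulr0 //; apply/negP => h.
have hk : (t k * g * (t l)^-1)%g \in H by rewrite TpartE ?tX ?groupM ?tG // el.
by move: nk'; rewrite (idx_uniq Gg hk h) eqxx.
Qed.

Lemma rho_mulM (M : 'M[algC]_n.+1) g i j l : g \in G ->
  t j = Tpart H X (t i * g)%g ->
  (rho_mx t chi g *m M) i l = chi (t i * g * (t j)^-1)%g * M j l.
Proof.
move=> Gg ej; rewrite !mxE (bigD1 j) //= big1 ?addr0 ?mxE // => j' nj'.
rewrite mxE cfun0 ?mul0r //; apply/negP => h.
have hj : (t i * g * (t j)^-1)%g \in H by rewrite TpartE ?tX ?groupM ?tG // ej.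
apply: (negP nj'); apply/eqP; apply: injt; apply: X_eq; rewrite ?tX //.
have -> : (t j' * (t j)^-1 = (t i * g * (t j')^-1)^-1 * (t i * g * (t j)^-1))%g.
  by rewrite !invMg !invgK !mulgA !mulgKV.
by rewrite groupM ?groupV.
Qed.

End Aux.
Unset Implicit Arguments.

Theorem proposition3p2 (gT : finGroupType) (G H : {group gT}) (n : nat)
  (t : 'I_n.+1 -> gT) (chi : 'CF(H)) (M : 'M[algC]_n.+1) :
  H \subset G ->
  injective t ->
  is_transversal (t @: setT) (rcosets H G) G ->
  t ord0 = 1%g ->
  chi \is a linear_char ->
  (forall g, g \in G -> M *m rho_mx t chi g = rho_mx t chi g *m M)
  <->
  (forall g, g \in G -> forall k i j : 'I_n.+1,
     t i = Tpart H (t @: setT) g ->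
     t j = Tpart H (t @: setT) (t k * g)%g ->
     M i j = (M ord0 k * (chi (Hpart H (t @: setT) g))^-1
              * chi (Hpart H (t @: setT) (t k * g)%g))%R).
Proof.
move=> sHG injt trX t0 lin; split.
- move=> comm g Gg k i j ei ej.
  move: (comm g Gg) => /matrixP /(_ ord0 j).
  rewrite (mulM_rho trX injt _ _ _ Gg ej) (rho_mulM trX injt _ _ _ (j:=i) Gg) ?t0 ?mul1g //.
  rewrite /Hpart -ei -ej => E.
  have nz : chi (g * (t i)^-1)%g != 0.
    by apply: lin_char_neq0 => //; rewrite (TpartE trX) ?tX // ei.
  by rewrite mulrAC E mulrC mulrA mulVf // mul1r.
- move=> B g Gg; apply/matrixP => i l.
  have Gl : (t l * g^-1)%g \in G by rewrite groupM ?groupV ?(tG trX).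
  have [k ek] := Tpart_idx trX Gl.
  have hkgl : (t k * g * (t l)^-1)%g \in H.
    have := TpartE trX Gl (tX t k); rewrite ek eqxx => h.
    by rewrite -groupV !invMg !invgK mulgA.
  have el : t l = Tpart H (t @: setT) (t k * g)%g by exact: TpartK trX _ _ _ Gg hkgl.
  have [j ej] := Tpart_idx trX (groupM (tG trX i) Gg).
  rewrite (mulM_rho trX injt chi M i Gg el) (rho_mulM trX injt chi M l Gg (esym ej)).
  have Gki : (t k * (t i)^-1)%g \in G by rewrite groupM ?groupV ?(tG trX).
  have [k' ek'] := Tpart_idx trX Gki.
  have hk' : (t k' * t i * (t k)^-1)%g \in H.
    have := TpartE trX Gki (tX t k'); rewrite ek' eqxx => h.
    by rewrite -groupV !invMg !invgK mulgA.
  have e1 : t k = Tpart H (t @: setT) (t k' * t i)%g by exact: TpartK trX _ _ _ (tG trX i) hk'.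
  have e2 : t l = Tpart H (t @: setT) (t k' * (t i * g))%g.
    apply: TpartK trX _ _ _ (groupM (tG trX i) Gg) _.
    have -> : (t k' * (t i * g) * (t l)^-1 = (t k' * t i * (t k)^-1) * (t k * g * (t l)^-1))%g.
      by rewrite !mulgA mulgKV.
    by rewrite groupM.
  have ei' : t i = Tpart H (t @: setT) (t i) by exact: Tpart_t trX i.
  have B1 := B (t i * g)%g (groupM (tG trX i) Gg) k' j l (esym ej) e2.
  have B2 := B (t i) (tG trX i) k' i k ei' e1.
  move: B1 B2; rewrite /Hpart -ei' -e1 -e2 ej mulgV (lin_char1 lin) invr1 mulr1 => -> ->.
  have -> : (t k' * (t i * g) * (t l)^-1 = (t k' * t i * (t k)^-1) * (t k * g * (t l)^-1))%g.
    by rewrite !mulgA mulgKV.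
  rewrite (lin_charM lin hk' hkgl).
  have nz : chi (t i * g * (t j)^-1)%g != 0.
    by apply: lin_char_neq0 => //; apply: TpartK' trX _ _ _ Gg (esym ej).
  by rewrite !mulrA (mulrC (chi (t i * g * (t j)^-1)%g)) mulfK.
Qed.
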